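(* Let $H=\sum_{i=1}^d\epsilon_i|\epsilon_i\rangle\langle\epsilon_i|$ be a Hamiltonian on $\mathbb{C}^d$ with orthonormal eigenbasis $\{|\epsilon_i\rangle\}$ and $\epsilon_1\le\cdots\le\epsilon_d$. Let $X$ be a (true, unknown) density matrix and $p_i=\mathrm{tr}(|\epsilon_i\rangle\langle\epsilon_i|X)$, $i=1,\dots,d$, and let $$\Omega_{\mathcal{I}}=\{\omega\succeq0:\ \mathrm{tr}(\omega)=1,\ \mathrm{tr}(\omega|\epsilon_i\rangle\langle\epsilon_i|)=p_i\ \forall i\}.$$ Let $\rho^\ast=\sum_i p_i|\epsilon_i\rangle\langle\epsilon_i|$. Then $\rho^\ast\in\Omega_{\mathcal{I}}$, the ergotropy is minimized over $\Omega_{\mathcal{I}}$ at $\rho^\ast$, and $$\min_{\omega\in\Omega_{\mathcal{I}}}\mathcal{E}(\omega,H)=\mathcal{E}(\rho^\ast,H)=\sum_{i=1}^dp_i\epsilon_i-\sum_{i=1}^dp_i^{\downarrow}\epsilon_i=\mathcal{E}_{IC}(X),$$ where $(p_1^\downarrow,\dots,p_d^\downarrow)$ is the nonincreasing rearrangement of $(p_1,\dots,p_d)$.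
   Context: The ergotropy of a state $\rho$ with Hamiltonian $H$ is $\mathcal{E}(\rho,H)=\max_{U}\big[\mathrm{tr}(\rho H)-\mathrm{tr}(HU\rho U^\dagger)\big]$ over $d\times d$ unitaries $U$. The incoherent ergotropy $\mathcal{E}_{IC}(X)$ of a state $X$ is the ergotropy of its dephased state in the energy eigenbasis, i.e. $\mathcal{E}_{IC}(X)=\mathcal{E}\big(\sum_i\langle\epsilon_i|X|\epsilon_i\rangle\,|\epsilon_i\rangle\langle\epsilon_i|,H\big)$. *)

(* Defs.v *)
From HB Require Import structures.
From mathcomp Require Import all_boot all_order all_algebra.
From mathcomp Require Import complex.
From mathcomp Require Import boolp classical_sets reals.
Set Implicit Arguments. Unset Strict Implicit. Unset Printing Implicit Defensive.
Import Order.TTheory GRing.Theory Num.Theory.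
Local Open Scope ring_scope.
Local Open Scope complex_scope.
Local Open Scope classical_set_scope.

Section Defs.
Variable R : realType.
Notation C := R[i].

Definition adj (m n : nat) (A : 'M[C]_(m, n)) : 'M[C]_(n, m) :=
  (map_mx Num.conj A)^T.

Definition unitary (d : nat) (U : 'M[C]_d) : Prop := U *m adj U = 1%:M.

Definition hermitian (d : nat) (A : 'M[C]_d) : Prop := adj A = A.

Definition psd (d : nat) (A : 'M[C]_d) : Prop :=
  hermitian A /\ forall v : 'cV[C]_d, 0 <= (adj v *m A *m v) 0 0.

Definition density (d : nat) (A : 'M[C]_d) : Prop := psd A /\ \tr A = 1.

(* ergotropy  E(rho,H) = max_U [ tr(rho H) - tr(H U rho U^dag) ]  (real part;
   these traces are real for Hermitian rho, H).  Defined as a supremum. *)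
Definition ergotropy (d : nat) (rho H : 'M[C]_d) : R :=
  sup [set e : R | exists U : 'M[C]_d, unitary U /\
        e = complex.Re (\tr (rho *m H)) - complex.Re (\tr (H *m U *m rho *m adj U))].

Definition proj (d : nat) (V : 'M[C]_d) (i : 'I_d) : 'M[C]_d :=
  col i V *m adj (col i V).

Definition dephase (d : nat) (V X : 'M[C]_d) : 'M[C]_d :=
  \sum_(i < d) (adj (col i V) *m X *m col i V) 0 0 *: proj V i.

Definition ergotropy_IC (d : nat) (V H X : 'M[C]_d) : R :=
  ergotropy (dephase V X) H.

Definition p_desc (d : nat) (p : 'I_d -> R) (i : 'I_d) : R :=
  nth 0 (sort (fun x y : R => y <= x) [seq p j | j <- enum 'I_d]) i.

End Defs.

(* Main.v *)
Require Import Defs.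
From HB Require Import structures.
From mathcomp Require Import all_boot all_order all_algebra.
From mathcomp Require Import complex.
From mathcomp Require Import boolp classical_sets reals.
From mathcomp Require Import fingroup perm ring lra.
Import Order.TTheory GRing.Theory Num.Theory.
Set Implicit Arguments. Unset Strict Implicit. Unset Printing Implicit Defensive.
Local Open Scope ring_scope.
Local Open Scope ring_scope.
Local Open Scope complex_scope.

Section Aux.
Variable R : realType.
Notation C := R[i].

Lemma adjM m n p (A : 'M[C]_(m, n)) (B : 'M[C]_(n, p)) :
  adj (A *m B) = adj B *m adj A.
Proof. by rewrite /adj map_mxM trmx_mul. Qed.

Lemma adjK m n (A : 'M[C]_(m, n)) : adj (adj A) = A.
Proof. by apply/matrixP => i j; rewrite !mxE conjCK. Qed.

Lemma adjE m n (A : 'M[C]_(m, n)) i j : adj A i j = (A j i)^*.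
Proof. by rewrite !mxE. Qed.

Lemma adj1 n : adj (1%:M : 'M[C]_n) = 1%:M.
Proof. by apply/matrixP => i j; rewrite !mxE eq_sym conjC_nat. Qed.

Lemma unitaryC n (U : 'M[C]_n) : unitary U -> adj U *m U = 1%:M.
Proof. exact: mulmx1C. Qed.

Lemma adj_col n (V : 'M[C]_n) i : adj (col i V) = row i (adj V).
Proof. by apply/matrixP => a b; rewrite !mxE. Qed.

Lemma ge0_RC (z : C) : 0 <= z -> z = (complex.Re z)%:C.
Proof. by move=> /ger0_Im hz; case: z hz => a b /= ->. Qed.

Lemma tr11 (A : 'M[C]_1) : \tr A = A 0 0.
Proof. by rewrite /mxtrace big_ord1. Qed.

Definition aa n (V M : 'M[C]_n) i := (adj (col i V) *m M *m col i V) 0 0.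

Lemma aaE n (V M : 'M[C]_n) i : aa V M i = (adj V *m M *m V) i i.
Proof.
rewrite /aa adj_col !mxE; apply: eq_bigr => k _; rewrite !mxE; congr (_ * _).
by apply: eq_bigr => l _; rewrite !mxE.
Qed.

Lemma tr_proj n (V M : 'M[C]_n) i : \tr (M *m proj V i) = aa V M i.
Proof. by rewrite /proj mulmxA mxtrace_mulC mulmxA tr11. Qed.

Lemma tr_projl n (V M : 'M[C]_n) i : \tr (proj V i *m M) = aa V M i.
Proof. by rewrite mxtrace_mulC tr_proj. Qed.

Lemma sum_aa n (V M : 'M[C]_n) : V *m adj V = 1%:M -> \sum_i aa V M i = \tr M.
Proof.
move=> hV; rewrite -{2}(mulmx1 M) -hV mulmxA mxtrace_mulC mulmxA.
by rewrite /mxtrace; apply: eq_bigr => i _; rewrite aaE.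
Qed.

Lemma tr_Hl n (V M : 'M[C]_n) (e : 'I_n -> R) :
  \tr ((\sum_i (e i)%:C *: proj V i) *m M) = \sum_i (e i)%:C * aa V M i.
Proof.
rewrite mulmx_suml raddf_sum; apply: eq_bigr => i _.
by rewrite -scalemxAl /= mxtraceZ tr_projl.
Qed.

Lemma tr_Hr n (V M : 'M[C]_n) (e : 'I_n -> R) :
  \tr (M *m (\sum_i (e i)%:C *: proj V i)) = \sum_i (e i)%:C * aa V M i.
Proof. by rewrite mxtrace_mulC tr_Hl. Qed.


Lemma conjV n (V U M : 'M[C]_n) : V *m adj V = 1%:M ->
  adj V *m (U *m M *m adj U) *m V =
  (adj V *m U *m V) *m (adj V *m M *m V) *m adj (adj V *m U *m V).
Proof.
move=> hV; rewrite !adjM adjK !mulmxA.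
by rewrite -!(mulmxA _ V (adj V)) hV !mulmx1.
Qed.

Lemma sum_proj n (V : 'M[C]_n) (f : 'I_n -> C) :
  \sum_i f i *: proj V i = V *m diag_mx (\row_i f i) *m adj V.
Proof.
apply/matrixP => a b; rewrite summxE !mxE; apply: eq_bigr => i _.
rewrite !mxE big_ord1 !mxE.
rewrite (bigD1 i) //= big1 ?addr0; last first.
  by move=> k /negbTE ki; rewrite !mxE ki mulr0n mulr0.
by rewrite !mxE eqxx mulr1n mulrA [f i * _]mulrC.
Qed.

Lemma conj_diag n (V : 'M[C]_n) d : adj V *m V = 1%:M ->
  adj V *m (V *m diag_mx d *m adj V) *m V = diag_mx d.
Proof. by move=> hV; rewrite !mulmxA hV mul1mx -mulmxA hV mulmx1. Qed.

Lemma diag_entry n (W : 'M[C]_n) d j :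
  (W *m diag_mx d *m adj W) j j = \sum_k W j k * d 0 k * (W j k)^*.
Proof.
rewrite !mxE; apply: eq_bigr => k _; rewrite mul_mx_diag !mxE //.
Qed.

Lemma adj_perm n (s : 'S_n) : adj (perm_mx s : 'M[C]_n) = perm_mx s^-1.
Proof. by rewrite /adj map_perm_mx tr_perm_mx. Qed.

Lemma perm_entry n (s : 'S_n) (B : 'M[C]_n) j :
  (perm_mx s *m B *m adj (perm_mx s)) j j = B (s j) (s j).
Proof. by rewrite adj_perm -col_permE -row_permE !mxE. Qed.

Lemma perm_unitary n (s : 'S_n) : unitary (perm_mx s : 'M[C]_n).
Proof. by rewrite /unitary adj_perm -perm_mxM mulgV perm_mx1. Qed.

End Aux.
Section Rearr.
Variable R : realType.

Lemma potential n (e r : 'I_n -> R) :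
  (forall i j : 'I_n, (i <= j)%N -> e i <= e j) ->
  (forall i j : 'I_n, (i <= j)%N -> r j <= r i) ->
  exists F : 'I_n -> R, forall j k, F j - F k <= (e j - e k) * r k.
Proof.
case: n e r => [|n] e r he hr; first by exists (fun _ => 0) => -[].
pose ee k := e (inord k); pose rr k := r (inord k).
have hee a b : (a <= b <= n)%N -> ee a <= ee b.
  by case/andP=> ab bn; have an := leq_ltn_trans ab (bn : (b < n.+1)%N); apply: he; rewrite !inordK.
have hrr a b : (a <= b <= n)%N -> rr b <= rr a.
  by case/andP=> ab bn; have an := leq_ltn_trans ab (bn : (b < n.+1)%N); apply: hr; rewrite !inordK.
pose Fn m := \sum_(i < m) (ee i.+1 - ee i) * rr i.
have FS m : Fn m.+1 = Fn m + (ee m.+1 - ee m) * rr m by rewrite /Fn big_ord_recr.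
have C1 j k : (k <= j <= n)%N -> Fn j - Fn k <= (ee j - ee k) * rr k.
  elim: j => [|j IH] /andP[kj jn].
    by move: kj; rewrite leqn0 => /eqP ->; rewrite !subrr mul0r.
  case: (ltngtP k j.+1) kj => // [kj _|->]; last by rewrite !subrr mul0r.
  have IH' : Fn j - Fn k <= (ee j - ee k) * rr k by apply: IH; rewrite -ltnS kj ltnW.
  rewrite FS.
  have h1 := hee j j.+1 ltac:(by rewrite leqnSn jn).
  have h2 := hrr k j ltac:(by rewrite -ltnS kj ltnW).
  nra.
have C2 j k : (j <= k <= n)%N -> Fn j - Fn k <= (ee j - ee k) * rr k.
  elim: k => [|k IH] /andP[jk kn].
    by move: jk; rewrite leqn0 => /eqP ->; rewrite !subrr mul0r.
  case: (ltngtP j k.+1) jk => // [jk _|->]; last by rewrite !subrr mul0r.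
  have IH' : Fn j - Fn k <= (ee j - ee k) * rr k by apply: IH; rewrite -ltnS jk ltnW.
  rewrite FS.
  have h1 := hee j k ltac:(by rewrite -ltnS jk ltnW).
  have h2 := hrr k k.+1 ltac:(by rewrite leqnSn kn).
  have h3 := hee k k.+1 ltac:(by rewrite leqnSn kn).
  nra.
exists (fun i : 'I_n.+1 => Fn i) => j k.
have ej : e j = ee j by rewrite /ee inord_val.
have ek : e k = ee k by rewrite /ee inord_val.
have rk : r k = rr k by rewrite /rr inord_val.
rewrite ej ek rk.
have jn : (j <= n)%N by rewrite -ltnS.
have kn : (k <= n)%N by rewrite -ltnS.
case: (leqP k j) => kj.
  by apply: C1; rewrite kj jn.
by apply: C2; rewrite (ltnW kj) kn.
Qed.

Lemma rearr n (e r : 'I_n -> R) (b : 'I_n -> 'I_n -> R) :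
  (forall i j : 'I_n, (i <= j)%N -> e i <= e j) ->
  (forall i j : 'I_n, (i <= j)%N -> r j <= r i) ->
  (forall j k, 0 <= b j k) ->
  (forall j, \sum_k b j k = 1) -> (forall k, \sum_j b j k = 1) ->
  \sum_j e j * r j <= \sum_j e j * \sum_k b j k * r k.
Proof.
move=> he hr hb row1 col1.
have [F hF] := potential he hr.
rewrite -subr_ge0.
have E1 : \sum_j e j * \sum_k b j k * r k - \sum_j e j * r j =
    \sum_j \sum_k b j k * ((e j - e k) * r k).
  have -> : \sum_j \sum_k b j k * ((e j - e k) * r k) =
     \sum_j \sum_k e j * (b j k * r k) - \sum_j \sum_k b j k * (e k * r k).
    rewrite -sumrB; apply: eq_bigr => j _; rewrite -sumrB; apply: eq_bigr => k _.
    ring.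
  congr (_ - _).
    by apply: eq_bigr => j _; rewrite mulr_sumr.
  rewrite exchange_big /=; apply: eq_bigr => k _.
  by rewrite -mulr_suml col1 mul1r.
have E2 : \sum_j \sum_k b j k * (F j - F k) = 0.
  have -> : \sum_j \sum_k b j k * (F j - F k) =
     \sum_j \sum_k F j * b j k - \sum_j \sum_k b j k * F k.
    rewrite -sumrB; apply: eq_bigr => j _; rewrite -sumrB; apply: eq_bigr => k _.
    ring.
  rewrite [X in _ - X]exchange_big /=.
  rewrite [X in X - _](eq_bigr (fun j => F j)); last first.
    by move=> j _; rewrite -mulr_sumr row1 mulr1.
  rewrite [X in _ - X](eq_bigr (fun k => F k)) ?subrr //.
  by move=> k _; rewrite -mulr_suml col1 mul1r.
rewrite E1 -[X in X <= _]E2; apply: ler_sum => j _; apply: ler_sum => k _.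
by apply: ler_wpM2l.
Qed.

End Rearr.
Lemma sortperm (R : realType) d (p : 'I_d -> R) :
  exists s : 'S_d, (forall j, p_desc p j = p (s j)) /\
     (forall i j : 'I_d, (i <= j)%N -> p (s j) <= p (s i)).
Proof.
pose t := [tuple p j | j < d].
pose l := sort (fun x y : R => y <= x) [seq p j | j <- enum 'I_d].
have lt : [seq p j | j <- enum 'I_d] = t.
  by rewrite -[RHS]map_tnth_enum; apply: eq_map => j; rewrite tnth_mktuple.
have pl : perm_eq l t by rewrite /l perm_sort lt.
case/tuple_permP: pl => s ls.
have sz : size l = d by rewrite ls size_map size_enum_ord.
have nl (j : 'I_d) : nth 0 l j = p (s j).
  by rewrite ls -(tnth_nth 0 [tuple tnth t (s i) | i < d]) !tnth_mktuple.
exists s; split; first by move=> j; exact: nl.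
move=> i j ij; rewrite -!nl.
have so : sorted (fun x y : R => y <= x) l by apply: sort_sorted => x y; exact: le_total.
have := sorted_leq_nth _ _ 0 so; apply.
- by move=> a b c ba cb; exact: le_trans cb ba.
- by move=> a.
- by rewrite inE sz.
- by rewrite inE sz.
- exact: ij.
Qed.

Theorem lemma1 (R : realType) (d : nat) (V : 'M[R[i]]_d) (eps : 'I_d -> R)
    (X : 'M[R[i]]_d) :
  unitary V ->
  (forall i j : 'I_d, (i <= j)%N -> eps i <= eps j) ->
  density X ->
  let H := \sum_(i < d) (eps i)%:C *: proj V i in
  let p := fun i : 'I_d => complex.Re (\tr (proj V i *m X)) in
  let Omega := fun w : 'M[R[i]]_d =>
    psd w /\ \tr w = 1 /\ forall i : 'I_d, \tr (w *m proj V i) = (p i)%:C in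
  let rho := \sum_(i < d) (p i)%:C *: proj V i in
  [/\ Omega rho,
      forall w, Omega w -> ergotropy rho H <= ergotropy w H,
      ergotropy rho H = \sum_(i < d) p i * eps i - \sum_(i < d) p_desc p i * eps i
    & ergotropy rho H = ergotropy_IC V H X].
Proof.
move=> hV heps [[hXh hXq] hX1] H p Omega rho.
have hV' : adj V *m V = 1%:M := unitaryC hV.
have pa i : aa V X i = (p i)%:C.
  have h0 : 0 <= aa V X i by exact: hXq.
  by rewrite /p tr_projl; exact: ge0_RC.
have p0 i : 0 <= p i.
  by have := hXq (col i V); rewrite -/(aa V X i) pa ler0c.
have rhoE : rho = V *m diag_mx (\row_i (p i)%:C) *m adj V by rewrite /rho sum_proj.
have aarho i : aa V rho i = (p i)%:C.
  by rewrite aaE rhoE conj_diag // !mxE (_ : (i == i) = true) ?mulr1n //; apply/eqP.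
have trwH w : Omega w -> \tr (w *m H) = (\sum_i p i * eps i)%:C.
  move=> [_ [_ hw]]; rewrite /H tr_Hr rmorph_sum; apply: eq_bigr => i _.
  by rewrite -tr_proj hw -rmorphM mulrC.
have eH U w : H *m U *m w *m adj U = H *m (U *m w *m adj U) by rewrite !mulmxA.
have hOrho : Omega rho.
  split; [split|split].
  - have adjD : adj (diag_mx (\row_i (p i)%:C)) = diag_mx (\row_i (p i)%:C).
      apply/matrixP => a b; rewrite adjE !mxE.
      have [->|ne] := eqVneq a b; first by rewrite mulr1n; exact: conjc_real.
      by rewrite !mulr0n conjc0.
    by rewrite /Defs.hermitian rhoE !adjM adjK adjD mulmxA.
  - move=> v; rewrite rhoE.
    have -> : adj v *m (V *m diag_mx (\row_i (p i)%:C) *m adj V) *m v =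
      adj (adj V *m v) *m diag_mx (\row_i (p i)%:C) *m (adj V *m v).
      by rewrite adjM adjK !mulmxA.
    rewrite mxE; apply: sumr_ge0 => k _; rewrite mul_mx_diag !mxE.
    rewrite mulrC mulrA; apply: mulr_ge0; first exact: mul_conjC_ge0.
    by rewrite ler0c.
  - rewrite -(sum_aa rho hV) -[RHS]hX1 -(sum_aa X hV).
    by apply: eq_bigr => i _; rewrite aarho pa.
  - by move=> i; rewrite tr_proj aarho.
have [s [hs1 hs2]] := sortperm p.
have bnd w : psd w -> \tr w = 1 -> has_ubound [set e : R | exists U : 'M[R[i]]_d, unitary U /\
        e = complex.Re (\tr (w *m H)) - complex.Re (\tr (H *m U *m w *m adj U))].
  move=> [_ hq] h1; exists (complex.Re (\tr (w *m H)) + \sum_i `|eps i|).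
  move=> e [U [hU ->]].
  rewrite lerD2l lerNl.
  have aM j : 0 <= aa V (U *m w *m adj U) j.
    rewrite /aa.
    have -> : adj (col j V) *m (U *m w *m adj U) *m col j V =
       adj (adj U *m col j V) *m w *m (adj U *m col j V) by rewrite adjM adjK !mulmxA.
    exact: hq.
  have sM : \sum_j aa V (U *m w *m adj U) j = 1.
    by rewrite sum_aa // mxtrace_mulC mulmxA unitaryC // mul1mx.
  pose c j := complex.Re (aa V (U *m w *m adj U) j).
  have cC j : aa V (U *m w *m adj U) j = (c j)%:C by apply: ge0_RC.
  have c0 j : 0 <= c j by rewrite -ler0c -cC.
  have c1 : \sum_j c j = 1.
    have : (\sum_j c j)%:C = 1 by rewrite rmorph_sum -sM; apply: eq_bigr => j _; rewrite cC.
    by move/(congr1 (@complex.Re R)).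
  rewrite eH /H tr_Hl (eq_bigr (fun j => (eps j * c j)%:C)); last first.
    by move=> j _; rewrite cC rmorphM.
  rewrite -rmorph_sum /=.
  rewrite -[X in - X <= _]mulr1 -c1 mulr_sumr -sumrN.
  apply: ler_sum => j _; rewrite -mulNr; apply: ler_wpM2r => //; rewrite lerNl.
  apply: le_trans (ler_norm (- eps j)) _; rewrite normrN (bigD1 j) //= lerDl.
  by apply: sumr_ge0 => i _.
have lower w : Omega w ->
    \sum_i p i * eps i - \sum_i p_desc p i * eps i <= ergotropy w H.
  move=> hw; have [[hwh hwq] [hw1 hwp]] := hw.
  pose U := V *m perm_mx s *m adj V.
  have hU : unitary U.
    rewrite /unitary /U !adjM adjK adj_perm !mulmxA.
    rewrite -(mulmxA _ (adj V) V) hV' mulmx1 -(mulmxA _ (perm_mx s)) -perm_mxM.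
    by rewrite mulgV perm_mx1 mulmx1 hV.
  have aU j : aa V (U *m w *m adj U) j = (p (s j))%:C.
    rewrite aaE conjV //.
    have -> : adj V *m U *m V = perm_mx s.
      by rewrite /U !mulmxA hV' mul1mx -mulmxA hV' mulmx1.
    by rewrite perm_entry -aaE -tr_proj hwp.
  have trHU : \tr (H *m U *m w *m adj U) = (\sum_j p_desc p j * eps j)%:C.
    rewrite eH /H tr_Hl rmorph_sum; apply: eq_bigr => j _.
    by rewrite aU hs1 -rmorphM mulrC.
  have Lin : [set e : R | exists U : 'M[R[i]]_d, unitary U /\
        e = complex.Re (\tr (w *m H)) - complex.Re (\tr (H *m U *m w *m adj U))]%classic
        (\sum_i p i * eps i - \sum_i p_desc p i * eps i).
    by exists U; split => //; rewrite trwH // trHU.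
  have := sup_upper_bound (conj (ex_intro _ _ Lin) (bnd w (conj hwh hwq) hw1)). move=> ub; exact: ub _ Lin.
have upper : ergotropy rho H <= \sum_i p i * eps i - \sum_i p_desc p i * eps i.
  apply: ge_sup.
    exists (complex.Re (\tr (rho *m H)) - complex.Re (\tr (H *m 1%:M *m rho *m adj 1%:M))).
    by exists 1%:M; split => //; rewrite /unitary adj1 mulmx1.
  move=> e [U [hU ->]]; rewrite trwH //= lerD2l lerN2.
  pose W := adj V *m U *m V.
  have hW : unitary W.
    rewrite /unitary /W !adjM adjK !mulmxA -(mulmxA _ V (adj V)) hV mulmx1.
    by rewrite -(mulmxA _ U (adj U)) hU mulmx1 hV'.
  have hW' := unitaryC hW.
  pose b j k := complex.Re (W j k * (W j k)^*).
  have bC j k : (b j k)%:C = W j k * (W j k)^*.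
    by symmetry; apply: ge0_RC; exact: mul_conjC_ge0.
  have b0 j k : 0 <= b j k by rewrite -ler0c bC; exact: mul_conjC_ge0.
  have row1 j : \sum_k b j k = 1.
    have : (\sum_k b j k)%:C = 1.
      rewrite rmorph_sum (eq_bigr _ (fun k _ => bC j k)).
      have := congr1 (fun M : 'M[R[i]]_d => M j j) (hW : W *m adj W = 1%:M).
      rewrite [in X in _ = X -> _]mxE eqxx mulr1n => <-.
      rewrite mxE; symmetry; rewrite (eq_bigr (fun k => W j k * (W j k)^*)) // => k _; rewrite adjE; reflexivity.
    by move/(congr1 (@complex.Re R)).
  have col1 k : \sum_j b j k = 1.
    have : (\sum_j b j k)%:C = 1.
      rewrite rmorph_sum (eq_bigr _ (fun j _ => bC j k)).
      have := congr1 (fun M : 'M[R[i]]_d => M k k) hW'.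
      rewrite [in X in _ = X -> _]mxE eqxx mulr1n => <-.
      rewrite mxE; symmetry; rewrite (eq_bigr (fun j => W j k * (W j k)^*)) // => j _; rewrite adjE mulrC; reflexivity.
    by move/(congr1 (@complex.Re R)).
  have trHU : \tr (H *m U *m rho *m adj U) = (\sum_j eps j * \sum_k b j k * p k)%:C.
    rewrite eH /H tr_Hl rmorph_sum; apply: eq_bigr => j _.
    rewrite aaE conjV // rhoE conj_diag // diag_entry rmorphM rmorph_sum.
    congr (_ * _); apply: eq_bigr => k _; rewrite -/W.
    transitivity ((b j k)%:C * (p k)%:C : R[i]); last by rewrite rmorphM.
    by rewrite bC mulrAC; congr (_ * _); rewrite mxE.
  rewrite trHU /=.
  rewrite (eq_bigr (fun j => eps j * p (s j))); last by move=> j _; rewrite hs1 mulrC.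
  rewrite [X in _ <= X](eq_bigr (fun j => eps j * \sum_k b j (s k) * p (s k))); last first.
    by move=> j _; rewrite (reindex_inj (@perm_inj _ s)).
  have rowS j : \sum_k b j (s k) = 1.
    by rewrite -(row1 j) [RHS](reindex_inj (@perm_inj _ s)).
  have colS k : \sum_j b j (s k) = 1 by exact: col1.
  exact: (@rearr R d eps (fun k => p (s k)) (fun j k => b j (s k)) heps hs2
            (fun j k => b0 j (s k)) rowS colS).
split.
- exact: hOrho.
- by move=> w hw; apply: le_trans upper (lower w hw).
- by apply/le_anti; rewrite upper (lower rho hOrho).
- rewrite /ergotropy_IC; congr ergotropy.
  by rewrite /dephase /rho; apply: eq_bigr => i _; congr (_ *: _); exact (esym (pa i)).
Qed.
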